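(* Let $k=6$, $p\in\mathbb{S}^n$, $R\in(0,\pi/2)$, $B_R=\{q:\mathbf{d}_p(q)\le R\}$, $y\in\partial B_R$, and $\gamma:[R,\pi]\to\mathbb{S}^n$ the unit-speed minimizing geodesic from $y$ to $-p$ with $\mathbf{d}_p(\gamma(s))=s$. Let $\boldsymbol f=(f_1,f_2)$ be the solution on $(0,\pi)$ of \[\boldsymbol f'=\frac{1}{\sin s}\begin{pmatrix}-3\cos s&3\cos s\\ \cos R-\cos s&\cos s-\cos R\end{pmatrix}\boldsymbol f,\qquad \boldsymbol f(R)\sin^4R=\cos R\,(3,2),\] let $h(s):=f_2(s)\sin^3s$, and define on $B_R\setminus\{y\}$ the vector field $Z=\Psi_y+\int_R^\pi h(s)\Psi_{\gamma(s)}\,ds$. Then at every point of $\partial B_R\setminus\{y\}$, \[-5\tan R\,\langle Z,\nabla\mathbf{d}_p\rangle=1+\int_R^\pi h(s)\,ds.\]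
   Context: $\mathbb{S}^n$ is the unit round sphere with Levi-Civita connection $\nabla$; $\mathbf{d}_q$ is geodesic distance from $q$. With $k=6$: $I_k(r)=\int_0^r\sin^{k-1}s\,ds$, $\varphi(t)=I_k(t)\sin^{1-k}t$ for $t\in(0,\pi)$, $\varphi(0)=0$, $\Phi_q=(\varphi\circ\mathbf{d}_q)\nabla\mathbf{d}_q$ on $\mathbb{S}^n\setminus\{-q\}$, and $\Psi_q:=\Phi_{-q}$ on $\mathbb{S}^n\setminus\{q\}$. *)

(* Defs.v *)
From Stdlib Require Import Reals Lra.
From Coquelicot Require Import Coquelicot.
Open Scope R_scope.

(** Points of R^{n+1} are represented as [nat -> R] whose coordinates of
    index > n vanish; [dot n] is the Euclidean inner product on coordinates 0..n. *)
Definition vec := nat -> R.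

Definition dot (n : nat) (x y : vec) : R := sum_f_R0 (fun i => x i * y i) n.

Definition on_sphere (n : nat) (x : vec) : Prop :=
  (forall i, (n < i)%nat -> x i = 0) /\ dot n x x = 1.

Definition vopp (x : vec) : vec := fun i => - x i.

Definition gdist (n : nat) (q x : vec) : R := acos (dot n q x).

Definition ebasis (i : nat) : vec := fun j => if Nat.eqb i j then 1 else 0.

Definition vnormalize (n : nat) (x : vec) : vec := fun i => x i / sqrt (dot n x x).

(** Riemannian gradient (Levi-Civita / round metric) of a function f on S^n at x:
    the Euclidean gradient of its 0-homogeneous extension F(z) = f(z/|z|),
    which at points of the sphere is tangent and equals grad f. *)
Definition sgrad (n : nat) (f : vec -> R) (x : vec) : vec :=
  fun i => if Nat.leb i n then
             Derive (fun t => f (vnormalize n (fun j => x j + t * ebasis i j))) 0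
           else 0.

Definition I6 (r : R) : R := RInt (fun s => sin s ^ 5) 0 r.

Definition phi6 (t : R) : R :=
  if Req_EM_T t 0 then 0 else I6 t / sin t ^ 5.

Definition Phi (n : nat) (q : vec) (x : vec) : vec :=
  fun i => phi6 (gdist n q x) * sgrad n (gdist n q) x i.

Definition Psi (n : nat) (q : vec) (x : vec) : vec := Phi n (vopp q) x.

Definition Zfield (n : nat) (y : vec) (gamma : R -> vec) (h : R -> R) (Rr : R)
  (x : vec) : vec :=
  fun i => Psi n y x i + RInt (fun s => h s * Psi n (gamma s) x i) Rr PI.

(* Main.v *)
Require Import Defs.
From Stdlib Require Import Reals Lia Psatz Lra FunctionalExtensionality.
From Coquelicot Require Import Coquelicot.
Open Scope R_scope.

Lemma sum_lin6 (k f1 f2 f3 f4 f5 f6 : nat -> R) (a1 a2 a3 a4 a5 a6 : R) (n : nat) :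
  (forall i, (i <= n)%nat -> k i = a1 * f1 i + a2 * f2 i + a3 * f3 i + a4 * f4 i + a5 * f5 i + a6 * f6 i) ->
  sum_f_R0 k n = a1 * sum_f_R0 f1 n + a2 * sum_f_R0 f2 n + a3 * sum_f_R0 f3 n
     + a4 * sum_f_R0 f4 n + a5 * sum_f_R0 f5 n + a6 * sum_f_R0 f6 n.
Proof.
  induction n as [|n IH]; intros H; simpl.
  - rewrite H; [ring | lia].
  - rewrite IH by (intros; apply H; lia). rewrite H by lia. ring.
Qed.

Lemma sum_nonneg (f : nat -> R) n : (forall i, (i <= n)%nat -> 0 <= f i) -> 0 <= sum_f_R0 f n.
Proof.
  induction n as [|n IH]; intros H; simpl.
  - apply H; lia.
  - assert (0 <= sum_f_R0 f n) by (apply IH; intros; apply H; lia).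
    assert (0 <= f (S n)) by (apply H; lia). lra.
Qed.

Lemma sum_zero_each (f : nat -> R) n : (forall i, (i <= n)%nat -> 0 <= f i) ->
  sum_f_R0 f n = 0 -> forall i, (i <= n)%nat -> f i = 0.
Proof.
  induction n as [|n IH]; intros H Hs i Hi; simpl in Hs.
  - assert (i = 0%nat) by lia. subst. exact Hs.
  - assert (0 <= sum_f_R0 f n) by (apply sum_nonneg; intros; apply H; lia).
    assert (0 <= f (S n)) by (apply H; lia).
    destruct (Nat.eq_dec i (S n)) as [->|Hne]. lra.
    apply IH; try lra; try lia. intros; apply H; lia.
Qed.

Lemma dot_sym n u v : dot n u v = dot n v u.
Proof. unfold dot. apply sum_eq. intros; ring. Qed.

Lemma dot_bound n u v : on_sphere n u -> on_sphere n v -> -1 <= dot n u v <= 1.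
Proof.
  intros [_ Hu] [_ Hv]. unfold dot in *.
  assert (H1 : 0 <= sum_f_R0 (fun i => (u i - v i) * (u i - v i)) n)
    by (apply sum_nonneg; intros; apply Rle_0_sqr).
  assert (H2 : 0 <= sum_f_R0 (fun i => (u i + v i) * (u i + v i)) n)
    by (apply sum_nonneg; intros; apply Rle_0_sqr).
  rewrite (sum_lin6 _ (fun i => u i * u i) (fun i => u i * v i) (fun i => v i * v i)
     (fun _ => 0) (fun _ => 0) (fun _ => 0) 1 (-2) 1 0 0 0) in H1 by (intros; ring).
  rewrite (sum_lin6 _ (fun i => u i * u i) (fun i => u i * v i) (fun i => v i * v i)
     (fun _ => 0) (fun _ => 0) (fun _ => 0) 1 2 1 0 0 0) in H2 by (intros; ring).
  lra.
Qed.

Lemma dot_one_eq n u v : on_sphere n u -> on_sphere n v -> dot n u v = 1 ->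
  forall i, (i <= n)%nat -> u i = v i.
Proof.
  intros [_ Hu] [_ Hv] H i Hi. unfold dot in *.
  assert (Hs : sum_f_R0 (fun i => (u i - v i) * (u i - v i)) n = 0).
  { rewrite (sum_lin6 _ (fun i => u i * u i) (fun i => u i * v i) (fun i => v i * v i)
     (fun _ => 0) (fun _ => 0) (fun _ => 0) 1 (-2) 1 0 0 0) by (intros; ring). lra. }
  pose proof (sum_zero_each _ n (fun i _ => Rle_0_sqr _) Hs i Hi) as Z. apply Rsqr_0_uniq in Z. lra.
Qed.

Lemma dot_mone_eq n u v : on_sphere n u -> on_sphere n v -> dot n u v = -1 ->
  forall i, (i <= n)%nat -> u i = - v i.
Proof.
  intros [_ Hu] [_ Hv] H i Hi. unfold dot in *.
  assert (Hs : sum_f_R0 (fun i => (u i + v i) * (u i + v i)) n = 0).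
  { rewrite (sum_lin6 _ (fun i => u i * u i) (fun i => u i * v i) (fun i => v i * v i)
     (fun _ => 0) (fun _ => 0) (fun _ => 0) 1 2 1 0 0 0) by (intros; ring). lra. }
  pose proof (sum_zero_each _ n (fun i _ => Rle_0_sqr _) Hs i Hi) as Z. apply Rsqr_0_uniq in Z. lra.
Qed.

Lemma gdist_cos n u v : on_sphere n u -> on_sphere n v -> dot n u v = cos (gdist n u v).
Proof. intros. unfold gdist. rewrite cos_acos; auto. apply dot_bound; auto. Qed.

Lemma sum_zero (f : nat -> R) m : (forall j, (j <= m)%nat -> f j = 0) -> sum_f_R0 f m = 0.
Proof.
  induction m; intros H; simpl. apply H; lia. rewrite IHm by (intros; apply H; lia). rewrite H by lia. ring.
Qed.

Lemma dot_ebasis n q i : (i <= n)%nat -> dot n q (ebasis i) = q i.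
Proof.
  unfold dot, ebasis. induction n as [|n IH]; intros Hi.
  - assert (i = 0%nat) by lia. subst. simpl. ring.
  - change (sum_f_R0 (fun j => q j * (if Nat.eqb i j then 1 else 0)) n + q (S n) * (if Nat.eqb i (S n) then 1 else 0) = q i).
    destruct (Nat.eq_dec i (S n)) as [->|Hne].
    + rewrite Nat.eqb_refl. rewrite sum_zero. ring.
      intros j Hj. destruct (Nat.eqb (S n) j) eqn:E; [apply Nat.eqb_eq in E; lia | ring].
    + rewrite IH by lia. destruct (Nat.eqb i (S n)) eqn:E; [apply Nat.eqb_eq in E; lia | ring].
Qed.

Lemma acos_derive c : -1 < c < 1 -> is_derive acos c (-1 / sqrt (1 - c²)).
Proof.
  intros Hc. apply is_derive_Reals. apply (derive_pt_eq_1 _ _ _ (derivable_pt_acos c Hc)).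
  apply derive_pt_acos.
Qed.

Lemma normalize_eq n q x i t : on_sphere n x -> (i <= n)%nat ->
  dot n q (vnormalize n (fun j => x j + t * ebasis i j)) =
  (dot n q x + t * q i) / sqrt (1 + 2 * t * x i + t ^ 2).
Proof.
  intros [_ Hx] Hi. unfold vnormalize.
  assert (Hvv : dot n (fun j => x j + t * ebasis i j) (fun j => x j + t * ebasis i j) = 1 + 2 * t * x i + t ^ 2).
  { unfold dot. rewrite (sum_lin6 _ (fun j => x j * x j) (fun j => x j * ebasis i j) (fun j => ebasis i j * ebasis i j)
     (fun _ => 0) (fun _ => 0) (fun _ => 0) 1 (2*t) (t^2) 0 0 0) by (intros; ring).
    fold (dot n x x) (dot n x (ebasis i)) (dot n (ebasis i) (ebasis i)).
    rewrite !dot_ebasis by auto. unfold ebasis at 1. rewrite Nat.eqb_refl. rewrite Hx. ring. }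
  rewrite Hvv.
  unfold dot. rewrite (sum_lin6 _ (fun j => q j * x j) (fun j => q j * ebasis i j) (fun _ => 0)
     (fun _ => 0) (fun _ => 0) (fun _ => 0) (/ sqrt (1 + 2 * t * x i + t ^ 2)) (t / sqrt (1 + 2 * t * x i + t ^ 2)) 0 0 0 0)
     by (intros; unfold Rdiv; ring).
  fold (dot n q x) (dot n q (ebasis i)). rewrite dot_ebasis by auto. unfold Rdiv. ring.
Qed.

Lemma sgrad_gdist n q x i : on_sphere n x -> -1 < dot n q x < 1 -> (i <= n)%nat ->
  sgrad n (gdist n q) x i = - (q i - dot n q x * x i) / sqrt (1 - (dot n q x)²).
Proof.
  intros Hx Hc Hi. unfold sgrad.
  replace (Nat.leb i n) with true by (symmetry; apply Nat.leb_le; auto).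
  set (c := dot n q x) in *.
  rewrite (Derive_ext _ (fun t => acos ((c + t * q i) / sqrt (1 + 2 * t * x i + t ^ 2)))).
  2:{ intros t. unfold gdist. rewrite normalize_eq; auto. }
  apply is_derive_unique.
  assert (Hg : is_derive (fun t => (c + t * q i) / sqrt (1 + 2 * t * x i + t ^ 2)) 0 (q i - c * x i)).
  { auto_derive.
    - replace (1 + 2 * 0 * x i + 0 * (0 * 1)) with 1 by ring. rewrite sqrt_1. repeat split; lra.
    - replace (1 + 2 * 0 * x i + 0 * (0 * 1)) with 1 by ring. rewrite sqrt_1. field. }
  assert (Hg0 : (c + 0 * q i) / sqrt (1 + 2 * 0 * x i + 0 ^ 2) = c).
  { replace (1 + 2 * 0 * x i + 0 ^ 2) with 1 by ring. rewrite sqrt_1. field. }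
  pose proof (is_derive_comp acos (fun t => (c + t * q i) / sqrt (1 + 2 * t * x i + t ^ 2)) 0 _ _
     (ltac:(cbv beta; rewrite Hg0; apply acos_derive; exact Hc)) Hg) as H.
  replace (- (q i - c * x i) / sqrt (1 - c²)) with (scal (q i - c * x i) (-1 / sqrt (1 - c²))).
  exact H.
  unfold scal; simpl; unfold mult; simpl. unfold Rdiv. ring.
Qed.

Lemma exd_cont (f : R -> R) x : ex_derive f x -> continuous f x.
Proof. intros H. apply (ex_derive_continuous (K := R_AbsRing) (V := R_NormedModule)). exact H. Qed.

Definition Qf (c : R) : R := (3 * c ^ 2 - 9 * c + 8) / (15 * (1 - c) ^ 3).

Lemma sin2' u : sin u ^ 2 = 1 - cos u ^ 2.
Proof. pose proof (sin2_cos2 u). unfold Rsqr in H. lra. Qed.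

Lemma I6_val t : I6 t = 8 / 15 - cos t + 2 / 3 * cos t ^ 3 - 1 / 5 * cos t ^ 5.
Proof.
  unfold I6.
  assert (H : is_RInt (fun s => sin s ^ 5) 0 t
     (minus ((fun u => - cos u + 2 / 3 * cos u ^ 3 - 1 / 5 * cos u ^ 5) t)
            ((fun u => - cos u + 2 / 3 * cos u ^ 3 - 1 / 5 * cos u ^ 5) 0))).
  { apply (is_RInt_derive (fun u => - cos u + 2 / 3 * cos u ^ 3 - 1 / 5 * cos u ^ 5) (fun s => sin s ^ 5)).
    - intros u _. auto_derive; [repeat split|]. cbv beta.
      assert (E : sin u ^ 5 = sin u * (1 - cos u ^ 2) ^ 2) by (rewrite <- sin2'; ring). rewrite E. field.
    - intros u _. apply exd_cont. auto_derive. repeat split. }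
  rewrite (is_RInt_unique _ _ _ _ H). unfold minus, plus, opp; simpl. rewrite cos_0. field.
Qed.

Lemma dot_vopp n q x : dot n (vopp q) x = - dot n q x.
Proof.
  unfold dot, vopp. rewrite (sum_lin6 _ (fun j => q j * x j) (fun _ => 0) (fun _ => 0)
     (fun _ => 0) (fun _ => 0) (fun _ => 0) (-1) 0 0 0 0 0) by (intros; ring). ring.
Qed.

Lemma phi6_0 : phi6 0 = 0.
Proof. unfold phi6. destruct (Req_EM_T 0 0); [reflexivity | congruence]. Qed.

Lemma Psi_formula n q x i : on_sphere n q -> on_sphere n x -> dot n q x < 1 -> (i <= n)%nat ->
  Psi n q x i = Qf (dot n q x) * (q i - dot n q x * x i).
Proof.
  intros Hq Hx Hc1 Hi. unfold Psi, Phi.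
  pose proof (dot_bound n q x Hq Hx) as Hb.
  unfold gdist at 1. rewrite dot_vopp.
  set (c := dot n q x) in *.
  destruct (Req_dec c (-1)) as [Hm|Hm].
  - rewrite Hm. replace (- -1) with 1 by ring. rewrite acos_1, phi6_0.
    rewrite (dot_mone_eq n q x Hq Hx Hm i Hi). ring.
  - assert (Hc : -1 < c < 1) by lra.
    rewrite sgrad_gdist; auto.
    2:{ rewrite dot_vopp. fold c. lra. }
    rewrite dot_vopp. fold c.
    assert (Ht := acos_bound_lt (- c) ltac:(lra)).
    unfold phi6. destruct (Req_EM_T (acos (- c)) 0) as [E|_]. lra.
    rewrite I6_val, cos_acos by lra. rewrite sin_acos by lra.
    unfold vopp.
    replace (1 - (- c)²) with (1 - c ^ 2) by (unfold Rsqr; ring).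
    set (sq := sqrt (1 - c ^ 2)).
    assert (Hsq : sq * sq = 1 - c ^ 2) by (apply sqrt_sqrt; nra).
    assert (Hsq0 : sq <> 0) by (intro E; rewrite E in Hsq; nra).
    transitivity ((8 / 15 - - c + 2 / 3 * (- c) ^ 3 - 1 / 5 * (- c) ^ 5) * (q i - c * x i) / ((sq * sq) ^ 3)).
    { field. auto. }
    rewrite Hsq. unfold Qf. field. repeat split; try lra; intro; nra.
Qed.

Lemma deriv_cont_pt (F : R -> R) x l : is_derive F x l -> continuity_pt F x.
Proof. intros H. apply continuity_pt_filterlim. apply exd_cont. exists l. exact H. Qed.

Lemma deriv_nonpos_decr (F dF : R -> R) a b : a <= b ->
  (forall x, a <= x <= b -> is_derive F x (dF x)) ->
  (forall x, a <= x <= b -> dF x <= 0) -> F b <= F a.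
Proof.
  intros Hab HD Hs.
  destruct (MVT_gen F a b dF) as [c [Hc E]].
  - intros x Hx. rewrite Rmin_left, Rmax_right in Hx by lra. apply HD; lra.
  - intros x Hx. rewrite Rmin_left, Rmax_right in Hx by lra. eapply deriv_cont_pt. apply HD; lra.
  - rewrite Rmin_left, Rmax_right in Hc by lra. assert (dF c <= 0) by (apply Hs; lra). nra.
Qed.

Lemma deriv_zero_right (F : R -> R) x0 M d : 0 < d ->
  (forall x, x0 <= x -> F x = 0) ->
  (forall x, x0 - d < x < x0 -> Rabs (F x) <= M * (x0 - x) ^ 2) ->
  is_derive F x0 0.
Proof.
  intros Hd HF HM. apply is_derive_Reals. intros eps Heps.
  assert (Hp : 0 < Rmin d (eps / (Rabs M + 1))).
  { apply Rmin_pos; auto. apply Rdiv_lt_0_compat; auto. pose proof (Rabs_pos M); lra. }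
  exists (mkposreal _ Hp). intros h Hh Hha. simpl in Hha.
  rewrite (HF x0) by lra.
  pose proof (Rmin_l d (eps / (Rabs M + 1))). pose proof (Rmin_r d (eps / (Rabs M + 1))).
  destruct (Rlt_or_le h 0) as [Hn|Hpos].
  - assert (HB := HM (x0 + h) ltac:(rewrite Rabs_left in Hha by lra; lra)).
    replace (x0 - (x0 + h)) with (- h) in HB by ring.
    replace ((F (x0 + h) - 0) / h - 0) with (F (x0 + h) / h) by (field; auto).
    unfold Rdiv. rewrite Rabs_mult, Rabs_inv. rewrite Rabs_left with (r := h) by lra.
    rewrite Rabs_left in Hha by lra.
    assert (HMa : M <= Rabs M) by apply Rle_abs.
    assert (Rabs (F (x0 + h)) <= Rabs M * h ^ 2).
    { eapply Rle_trans. exact HB. replace ((- h) ^ 2) with (h ^ 2) by ring. apply Rmult_le_compat_r; nra. }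
    apply Rmult_lt_reg_r with (- h). lra.
    rewrite Rmult_assoc, Rinv_l by lra. rewrite Rmult_1_r.
    assert (- h < eps / (Rabs M + 1)) by lra.
    assert (Rabs M * h ^ 2 < eps * - h).
    { assert (HA : 0 <= Rabs M) by apply Rabs_pos.
      assert ((Rabs M + 1) * (- h) < eps).
      { apply Rmult_lt_reg_r with (/ (Rabs M + 1)). apply Rinv_0_lt_compat; lra.
        replace ((Rabs M + 1) * - h * / (Rabs M + 1)) with (- h) by (field; lra). exact H2. }
      nra. }
    lra.
  - rewrite (HF (x0 + h)) by lra. replace ((0 - 0) / h - 0) with 0 by (field; auto).
    rewrite Rabs_R0. auto.
Qed.

Lemma cont_zero_right (F : R -> R) x0 M d : 0 < d ->
  (forall x, x0 <= x -> F x = 0) ->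
  (forall x, x0 - d < x < x0 -> Rabs (F x) <= M * (x0 - x)) ->
  continuous F x0.
Proof.
  intros Hd HF HM. apply continuity_pt_filterlim.
  intros eps Heps.
  exists (Rmin d (eps / (Rabs M + 1))). split.
  { apply Rmin_pos; auto. apply Rdiv_lt_0_compat; auto. pose proof (Rabs_pos M); lra. }
  intros x [_ Hx]. simpl in *. unfold Rdist in *. rewrite (HF x0) by lra.
  pose proof (Rmin_l d (eps / (Rabs M + 1))). pose proof (Rmin_r d (eps / (Rabs M + 1))).
  rewrite Rminus_0_r.
  destruct (Rlt_or_le x x0) as [Hn|Hpos].
  - rewrite Rabs_left in Hx by lra.
    assert (HB := HM x ltac:(lra)).
    assert (HA : 0 <= Rabs M) by apply Rabs_pos. assert (M <= Rabs M) by apply Rle_abs.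
    assert ((Rabs M + 1) * (x0 - x) < eps).
    { apply Rmult_lt_reg_r with (/ (Rabs M + 1)). apply Rinv_0_lt_compat; lra.
      replace ((Rabs M + 1) * (x0 - x) * / (Rabs M + 1)) with (x0 - x) by (field; lra).
      replace (eps * / (Rabs M + 1)) with (eps / (Rabs M + 1)) by reflexivity. lra. }
    nra.
  - rewrite (HF x) by lra. rewrite Rabs_R0. auto.
Qed.

Lemma abs_le_b x y : Rabs x <= y -> - y <= x <= y.
Proof. intros H. split_Rabs; lra. Qed.

Lemma abs_le_i x y : - y <= x <= y -> Rabs x <= y.
Proof. intros H. split_Rabs; lra. Qed.

Lemma div_nonpos a b : a <= 0 -> 0 < b -> a / b <= 0.
Proof. intros Ha Hb. unfold Rdiv. assert (0 < / b) by (apply Rinv_0_lt_compat; auto). nra. Qed.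

Lemma sq_derive (g : R -> R) x l : is_derive g x l -> is_derive (fun t => g t * g t) x (2 * g x * l).
Proof.
  intros H. assert (X : ex_derive g x) by (eexists; exact H).
  assert (Y : Derive g x = l) by (apply is_derive_unique; exact H).
  auto_derive. auto. change (fun t => g t) with g. rewrite Y. ring.
Qed.

Lemma f_bounds (f1 f2 : R -> R) (r Rr : R) :
  0 <= r <= 1 -> 0 < Rr < PI ->
  (forall s, 0 < s < PI -> is_derive f1 s ((- 3 * cos s * f1 s + 3 * cos s * f2 s) / sin s)) ->
  (forall s, 0 < s < PI -> is_derive f2 s (((r - cos s) * f1 s + (cos s - r) * f2 s) / sin s)) ->
  exists K, 0 <= K /\ forall s, Rr <= s < PI ->
    Rabs (f1 s) <= K / sin s ^ 2 /\ Rabs (f2 s) <= K / sin s ^ 2.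
Proof.
  intros Hr HR D1 D2.
  set (v := fun s => (f1 s - f2 s) * sin s ^ 2).
  set (V := Rabs (v Rr)).
  assert (Hsin : forall s, 0 < s < PI -> 0 < sin s) by (intros; apply sin_gt_0; lra).
  assert (E1 : forall s, 0 < s < PI -> ex_derive f1 s /\ Derive f1 s = (- 3 * cos s * f1 s + 3 * cos s * f2 s) / sin s).
  { intros s Hs. split. eexists; apply D1; auto. apply is_derive_unique; apply D1; auto. }
  assert (E2 : forall s, 0 < s < PI -> ex_derive f2 s /\ Derive f2 s = ((r - cos s) * f1 s + (cos s - r) * f2 s) / sin s).
  { intros s Hs. split. eexists; apply D2; auto. apply is_derive_unique; apply D2; auto. }
  assert (Dv : forall s, 0 < s < PI -> is_derive v s (- r * v s / sin s)).
  { intros s Hs. unfold v. destruct (E1 s Hs) as [X1 Y1]. destruct (E2 s Hs) as [X2 Y2].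
    assert (sin s <> 0) by (specialize (Hsin s Hs); lra).
    auto_derive. repeat split; auto. change (fun x => f1 x) with f1; change (fun x => f2 x) with f2. rewrite Y1, Y2. field. auto. }
  assert (Hv : forall s, Rr <= s < PI -> Rabs (v s) <= V).
  { intros s Hs. unfold V. apply Rsqr_le_abs_0.
    assert (H := deriv_nonpos_decr (fun s => (v s)²) (fun s => 2 * v s * (- r * v s / sin s)) Rr s ltac:(lra)).
    apply H.
    - intros x Hx. unfold Rsqr. 
      apply (is_derive_ext (fun s => v s * v s)). intros; reflexivity.
      apply sq_derive. apply Dv. lra.
    - intros x Hx. assert (0 < sin x) by (apply Hsin; lra).
      replace (2 * v x * (- r * v x / sin x)) with (- (2 * r * (v x * v x)) / sin x) by (field; lra).
      apply div_nonpos; [|auto]. assert (0 <= v x * v x) by nra. nra. }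
  set (Psi0 := fun s => - 2 * V * cos s / sin s ^ 2).
  assert (DPsi : forall s, 0 < s < PI -> is_derive Psi0 s (2 * V * (1 + cos s ^ 2) / sin s ^ 3)).
  { intros s Hs. unfold Psi0. assert (sin s <> 0) by (specialize (Hsin s Hs); lra).
    auto_derive. auto.
    replace (1 + cos s ^ 2) with (sin s ^ 2 + 2 * cos s ^ 2) by (rewrite sin2'; ring). field. auto. }
  assert (Df2 : forall s, 0 < s < PI -> is_derive f2 s ((r - cos s) * v s / sin s ^ 3)).
  { intros s Hs. assert (sin s <> 0) by (specialize (Hsin s Hs); lra).
    apply (is_derive_ext f2). intros; reflexivity.
    replace ((r - cos s) * v s / sin s ^ 3) with (((r - cos s) * f1 s + (cos s - r) * f2 s) / sin s).
    apply D2; auto. unfold v. field. auto. }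
  assert (Hnum : forall s, Rr <= s < PI -> Rabs ((r - cos s) * v s) <= 2 * V * (1 + cos s ^ 2)).
  { intros s Hs. rewrite Rabs_mult. pose proof (Hv s Hs). pose proof (COS_bound s).
    assert (Rabs (r - cos s) <= 2) by (apply abs_le_i; lra).
    assert (0 <= Rabs (v s)) by apply Rabs_pos. assert (0 <= Rabs (r - cos s)) by apply Rabs_pos.
    assert (0 <= cos s ^ 2) by nra. nra. }
  assert (Up : forall s, Rr <= s < PI -> f2 s - Psi0 s <= f2 Rr - Psi0 Rr).
  { intros s Hs.
    apply (deriv_nonpos_decr (fun s => f2 s - Psi0 s) (fun x => (r - cos x) * v x / sin x ^ 3 - 2 * V * (1 + cos x ^ 2) / sin x ^ 3) Rr s ltac:(lra)).
    - intros x Hx. apply (is_derive_minus f2 Psi0). apply Df2; lra. apply DPsi; lra.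
    - intros x Hx. assert (0 < sin x) by (apply Hsin; lra).
      replace ((r - cos x) * v x / sin x ^ 3 - 2 * V * (1 + cos x ^ 2) / sin x ^ 3)
        with (((r - cos x) * v x - 2 * V * (1 + cos x ^ 2)) / sin x ^ 3) by (field; lra).
      apply div_nonpos. pose proof (abs_le_b _ _ (Hnum x ltac:(lra))). lra. apply pow_lt; auto. }
  assert (Lo : forall s, Rr <= s < PI -> - f2 s - Psi0 s <= - f2 Rr - Psi0 Rr).
  { intros s Hs.
    apply (deriv_nonpos_decr (fun s => - f2 s - Psi0 s) (fun x => - ((r - cos x) * v x / sin x ^ 3) - 2 * V * (1 + cos x ^ 2) / sin x ^ 3) Rr s ltac:(lra)).
    - intros x Hx. apply (is_derive_minus (fun s => - f2 s) Psi0). apply (is_derive_opp f2). apply Df2; lra. apply DPsi; lra.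
    - intros x Hx. assert (0 < sin x) by (apply Hsin; lra).
      replace (- ((r - cos x) * v x / sin x ^ 3) - 2 * V * (1 + cos x ^ 2) / sin x ^ 3)
        with ((- ((r - cos x) * v x) - 2 * V * (1 + cos x ^ 2)) / sin x ^ 3) by (field; lra).
      apply div_nonpos. pose proof (abs_le_b _ _ (Hnum x ltac:(lra))). lra. apply pow_lt; auto. }
  assert (HPsi : forall s, 0 < s < PI -> Rabs (Psi0 s) <= 2 * V / sin s ^ 2).
  { intros s Hs. unfold Psi0. assert (0 < sin s) by auto. pose proof (COS_bound s).
    assert (0 <= V) by apply Rabs_pos.
    replace (- 2 * V * cos s / sin s ^ 2) with ((2 * V / sin s ^ 2) * (- cos s)) by (field; lra).
    rewrite Rabs_mult. rewrite (Rabs_right (2 * V / sin s ^ 2)).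
    2:{ apply Rle_ge. apply Rmult_le_pos. lra. left; apply Rinv_0_lt_compat, pow_lt; auto. }
    assert (Rabs (- cos s) <= 1) by (apply abs_le_i; lra).
    assert (0 <= 2 * V / sin s ^ 2) by (apply Rmult_le_pos; [lra | left; apply Rinv_0_lt_compat, pow_lt; auto]).
    nra. }
  assert (0 <= V) by apply Rabs_pos.
  assert (HsR : 0 < sin Rr) by (apply Hsin; lra).
  set (K2 := Rabs (f2 Rr) + 2 * V / sin Rr ^ 2 + 2 * V).
  assert (HA : 0 <= Rabs (f2 Rr) + 2 * V / sin Rr ^ 2).
  { pose proof (Rabs_pos (f2 Rr)). assert (0 <= 2 * V / sin Rr ^ 2); [|lra].
    apply Rmult_le_pos. lra. left; apply Rinv_0_lt_compat, pow_lt; auto. }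
  exists (K2 + V). split. unfold K2; lra.
  intros s Hs. assert (Hs0 : 0 < sin s) by (apply Hsin; lra).
  assert (HS2 : 0 < sin s ^ 2 <= 1) by (split; [apply pow_lt; auto | pose proof (SIN_bound s); nra]).
  assert (Hf2 : Rabs (f2 s) <= K2 / sin s ^ 2).
  { pose proof (Up s Hs) as U1. pose proof (Lo s Hs) as U2. pose proof (HPsi s ltac:(lra)) as P1. pose proof (HPsi Rr ltac:(lra)) as P2.
    apply abs_le_b in P1. apply abs_le_b in P2.
    assert (Rabs (f2 s) <= (Rabs (f2 Rr) + 2 * V / sin Rr ^ 2) + 2 * V / sin s ^ 2).
    { apply abs_le_i. pose proof (Rle_abs (f2 Rr)) as A1. pose proof (Rle_abs (- f2 Rr)) as A2. rewrite Rabs_Ropp in A2. lra. }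
    assert ((Rabs (f2 Rr) + 2 * V / sin Rr ^ 2) <= (Rabs (f2 Rr) + 2 * V / sin Rr ^ 2) / sin s ^ 2).
    { set (A := Rabs (f2 Rr) + 2 * V / sin Rr ^ 2) in *.
      apply Rmult_le_reg_r with (sin s ^ 2). lra. unfold Rdiv. rewrite Rmult_assoc, Rinv_l by lra. nra. }
    unfold K2. replace ((Rabs (f2 Rr) + 2 * V / sin Rr ^ 2 + 2 * V) / sin s ^ 2) with
      ((Rabs (f2 Rr) + 2 * V / sin Rr ^ 2) / sin s ^ 2 + 2 * V / sin s ^ 2) by (field; lra). lra. }
  split; auto.
  assert (Hu : f1 s = f2 s + v s / sin s ^ 2) by (unfold v; field; lra).
  rewrite Hu. eapply Rle_trans. apply Rabs_triang.
  assert (Rabs (v s / sin s ^ 2) <= V / sin s ^ 2).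
  { unfold Rdiv. rewrite Rabs_mult. rewrite (Rabs_right (/ sin s ^ 2)).
    apply Rmult_le_compat_r. left; apply Rinv_0_lt_compat; lra. apply Hv; lra.
    left; apply Rinv_0_lt_compat; lra. }
  replace ((K2 + V) / sin s ^ 2) with (K2 / sin s ^ 2 + V / sin s ^ 2) by (field; lra). lra.
  replace ((K2 + V) / sin s ^ 2) with (K2 / sin s ^ 2 + V / sin s ^ 2) by (field; lra).
  assert (0 <= V / sin s ^ 2) by (apply Rmult_le_pos; [lra | left; apply Rinv_0_lt_compat; lra]). lra.
Qed.

Definition cc (r a s : R) : R := r * cos s + a * sin s.
Definition ht (f2 : R -> R) (s : R) : R := if Rlt_dec s PI then f2 s * sin s ^ 3 else 0.
Definition Wf (f1 f2 : R -> R) (r a s : R) : R :=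
  sin s ^ 4 / 15 * (f1 s / (1 - cc r a s) + f2 s / (1 - cc r a s) ^ 2).
Definition Wt (f1 f2 : R -> R) (r a s : R) : R := if Rlt_dec s PI then Wf f1 f2 r a s else 0.
Definition Gm (r a s : R) : R := (cos s - cc r a s * r) * Qf (cc r a s) - r / 5.

Lemma cont_ext_R (f g : R -> R) x : locally x (fun y => g y = f y) -> continuous g x -> continuous f x.
Proof. intros H1 H2. exact (continuous_ext_loc (T := R_UniformSpace) (U := R_UniformSpace) f g x H1 H2). Qed.

Lemma der_ext_R (f g : R -> R) x l : locally x (fun t => f t = g t) -> is_derive f x l -> is_derive g x l.
Proof. intros H1 H2. exact (is_derive_ext_loc (K := R_AbsRing) (V := R_NormedModule) f g x l H1 H2). Qed.

Lemma cont_mult_R (f g : R -> R) x : continuous f x -> continuous g x -> continuous (fun y => f y * g y) x.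
Proof. intros H1 H2. exact (continuous_mult (U := R_UniformSpace) (K := R_AbsRing) f g x H1 H2). Qed.

Lemma locally_lt_PI s : s < PI -> locally s (fun t => t < PI).
Proof. intros H. apply (open_lt PI s H). Qed.

Lemma sin_le_PI_x x : PI / 2 <= x < PI -> 0 < sin x <= PI - x.
Proof.
  intros H. split. apply sin_gt_0; lra.
  rewrite <- sin_PI_x. left. apply sin_lt_x. lra.
Qed.

Lemma W_deriv (f1 f2 : R -> R) r a s : 0 < s < PI -> cc r a s <> 1 ->
  is_derive f1 s ((- 3 * cos s * f1 s + 3 * cos s * f2 s) / sin s) ->
  is_derive f2 s (((r - cos s) * f1 s + (cos s - r) * f2 s) / sin s) ->
  is_derive (Wf f1 f2 r a) s (f2 s * sin s ^ 3 * Gm r a s).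
Proof.
  intros Hs Hc D1 D2.
  assert (X1 : ex_derive f1 s) by (eexists; exact D1).
  assert (X2 : ex_derive f2 s) by (eexists; exact D2).
  assert (Y1 := is_derive_unique _ _ _ D1). assert (Y2 := is_derive_unique _ _ _ D2).
  assert (HS : sin s <> 0) by (pose proof (sin_gt_0 s ltac:(lra) ltac:(lra)); lra).
  unfold cc in Hc. assert (Hc' : 1 - (r * cos s + a * sin s) <> 0) by lra.
  unfold Wf, Gm, cc, Qf.
  auto_derive. repeat split; auto.
  change (fun x => f1 x) with f1; change (fun x => f2 x) with f2. rewrite Y1, Y2.
  match goal with |- ?L = ?R => transitivity (R + (sin s ^ 2 + cos s ^ 2 - 1) *
     (r * sin s ^ 4 * (f1 s * ((r * cos s + a * sin s) - 1) - 2 * f2 s)) / (15 * sin s * (1 - (r * cos s + a * sin s)) ^ 3)) end.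
  - field. auto.
  - rewrite (sin2' s). field. auto.
Qed.

Lemma ftc_main (f1 f2 : R -> R) (Rr a : R) :
  0 < Rr < PI / 2 ->
  (forall s, 0 < s < PI -> is_derive f1 s ((- 3 * cos s * f1 s + 3 * cos s * f2 s) / sin s)) ->
  (forall s, 0 < s < PI -> is_derive f2 s (((cos Rr - cos s) * f1 s + (cos s - cos Rr) * f2 s) / sin s)) ->
  a <= sin Rr ->
  (forall s, Rr <= s <= PI -> cc (cos Rr) a s < 1) ->
  (forall s, Rr <= s <= PI -> continuous (ht f2) s) /\
  is_RInt (fun s => ht f2 s * Gm (cos Rr) a s) Rr PI (- Wf f1 f2 (cos Rr) a Rr).
Proof.
  intros HR D1 D2 Ha Hc.
  set (r := cos Rr) in *.
  assert (HPI := PI_RGT_0).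
  assert (Hr : 0 < r) by (apply cos_gt_0; lra).
  assert (Hr1 : r <= 1) by (pose proof (COS_bound Rr); unfold r; lra).
  assert (HsR : 0 < sin Rr) by (apply sin_gt_0; lra).
  assert (HsR1 : sin Rr < 1).
  { pose proof (sin2_cos2 Rr). unfold Rsqr in H. fold r in H. pose proof (SIN_bound Rr). nra. }
  destruct (f_bounds f1 f2 r Rr ltac:(lra) ltac:(lra) D1 D2) as [K [HK HB]].
  assert (Hcont : forall s, Rr <= s <= PI -> continuous (ht f2) s).
  { intros s Hs. destruct (Req_dec s PI) as [->|Hne].
    - apply (cont_zero_right _ PI K (PI / 2)). lra.
      + intros x Hx. unfold ht. destruct (Rlt_dec x PI); [lra | reflexivity].
      + intros x Hx. unfold ht. destruct (Rlt_dec x PI); [|lra].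
        destruct (HB x ltac:(lra)) as [_ B2].
        destruct (sin_le_PI_x x ltac:(lra)) as [S0 S1].
        rewrite Rabs_mult. rewrite (Rabs_right (sin x ^ 3)) by (apply Rle_ge; apply pow_le; lra).
        assert (Rabs (f2 x) * sin x ^ 3 <= K / sin x ^ 2 * sin x ^ 3).
        { apply Rmult_le_compat_r. apply pow_le; lra. exact B2. }
        replace (K / sin x ^ 2 * sin x ^ 3) with (K * sin x) in H by (field; lra).
        assert (K * sin x <= K * (PI - x)) by (apply Rmult_le_compat_l; lra). lra.
    - assert (Hlt : s < PI) by lra.
      apply (cont_ext_R (ht f2) (fun t => f2 t * sin t ^ 3)).
      + apply (filter_imp (fun t => t < PI)). intros t Ht. unfold ht. destruct (Rlt_dec t PI); [reflexivity | lra].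
        apply locally_lt_PI; auto.
      + apply exd_cont. auto_derive. repeat split. eexists. apply D2. lra. }
  split; auto.
  assert (H := is_RInt_derive (Wt f1 f2 r a) (fun s => ht f2 s * Gm r a s) Rr PI).
  rewrite Rmin_left, Rmax_right in H by lra.
  replace (- Wf f1 f2 r a Rr) with (minus (Wt f1 f2 r a PI) (Wt f1 f2 r a Rr)).
  apply H.
  - intros x Hx. destruct (Req_dec x PI) as [->|Hne].
    + unfold ht. destruct (Rlt_dec PI PI) as [E|_]. lra. rewrite Rmult_0_l.
      set (dl := 1 - sin Rr).
      apply (deriv_zero_right _ PI (K * (1 / dl + 1 / dl ^ 2) / 15) (PI / 2)). lra.
      * intros y Hy. unfold Wt. destruct (Rlt_dec y PI); [lra | reflexivity].
      * intros y Hy. unfold Wt. destruct (Rlt_dec y PI) as [_|]; [|lra].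
        destruct (HB y ltac:(lra)) as [B1 B2].
        destruct (sin_le_PI_x y ltac:(lra)) as [S0 S1].
        assert (Hcc : cc r a y <= sin Rr).
        { unfold cc. assert (cos y <= 0) by (apply cos_le_0; lra). pose proof (SIN_bound y).
          destruct (Rle_or_lt 0 a). nra. nra. }
        assert (Hdl : 0 < dl) by (unfold dl; lra).
        assert (Hom : dl <= 1 - cc r a y) by (unfold dl; lra).
        unfold Wf. rewrite Rabs_mult.
        rewrite (Rabs_right (sin y ^ 4 / 15)) by (apply Rle_ge; apply Rmult_le_pos; [apply pow_le; lra | lra]).
        assert (T1 : Rabs (f1 y / (1 - cc r a y)) <= K / sin y ^ 2 * (1 / dl)).
        { unfold Rdiv. rewrite Rabs_mult. rewrite Rabs_Rinv by lra. rewrite (Rabs_right (1 - cc r a y)) by lra.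
          apply Rmult_le_compat. apply Rabs_pos. left; apply Rinv_0_lt_compat; lra. exact B1.
          rewrite Rmult_1_l. apply Rinv_le_contravar; lra. }
        assert (T2 : Rabs (f2 y / (1 - cc r a y) ^ 2) <= K / sin y ^ 2 * (1 / dl ^ 2)).
        { unfold Rdiv. rewrite Rabs_mult. rewrite Rabs_Rinv by (apply pow_nonzero; lra).
          rewrite (Rabs_right ((1 - cc r a y) ^ 2)) by (apply Rle_ge, pow_le; lra).
          apply Rmult_le_compat. apply Rabs_pos. left; apply Rinv_0_lt_compat, pow_lt; lra. exact B2.
          rewrite Rmult_1_l. apply Rinv_le_contravar. apply pow_lt; lra. apply pow_incr; lra. }
        assert (T := Rabs_triang (f1 y / (1 - cc r a y)) (f2 y / (1 - cc r a y) ^ 2)).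
        assert (Hp : 0 <= sin y ^ 4 / 15) by (apply Rmult_le_pos; [apply pow_le; lra | lra]).
        eapply Rle_trans. apply Rmult_le_compat_l. exact Hp.
        eapply Rle_trans. exact T. apply Rplus_le_compat; [exact T1 | exact T2].
        replace (sin y ^ 4 / 15 * (K / sin y ^ 2 * (1 / dl) + K / sin y ^ 2 * (1 / dl ^ 2)))
          with (K * (1 / dl + 1 / dl ^ 2) / 15 * sin y ^ 2) by (field; lra).
        apply Rmult_le_compat_l.
        { apply Rmult_le_pos; [|lra]. apply Rmult_le_pos; auto.
          assert (0 < 1 / dl) by (apply Rdiv_lt_0_compat; lra).
          assert (0 < 1 / dl ^ 2) by (apply Rdiv_lt_0_compat; [lra | apply pow_lt; lra]). lra. }
        apply pow_incr. lra.
    + assert (Hlt : x < PI) by lra.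
      apply (der_ext_R (Wf f1 f2 r a)).
      { apply (filter_imp (fun t => t < PI)). intros t Ht. unfold Wt. destruct (Rlt_dec t PI); [reflexivity | lra].
        apply locally_lt_PI; auto. }
      unfold ht. destruct (Rlt_dec x PI) as [_|]; [|lra].
      apply W_deriv. lra. pose proof (Hc x ltac:(lra)). intro; lra. apply D1; lra. apply D2; lra.
  - intros x Hx. apply (cont_mult_R (ht f2) (Gm r a)). apply Hcont; lra.
    apply exd_cont. unfold Gm, Qf, cc. auto_derive. pose proof (Hc x Hx). unfold cc in H0.
    repeat split; auto. repeat apply Rmult_integral_contrapositive_currified; lra.
  - unfold minus, plus, opp; simpl. unfold Wt. destruct (Rlt_dec PI PI); [lra|].
    destruct (Rlt_dec Rr PI); [|lra]. apply Rplus_0_l.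
Qed.

Lemma RInt_lin3 (f g h : R -> R) a b c1 c2 c3 :
  ex_RInt f a b -> ex_RInt g a b -> ex_RInt h a b ->
  RInt (fun s => c1 * f s + c2 * g s + c3 * h s) a b = c1 * RInt f a b + c2 * RInt g a b + c3 * RInt h a b.
Proof.
  intros [lf Hf] [lg Hg] [lh Hh].
  rewrite (is_RInt_unique f a b lf Hf), (is_RInt_unique g a b lg Hg), (is_RInt_unique h a b lh Hh).
  apply is_RInt_unique.
  apply (is_RInt_plus (fun s => c1 * f s + c2 * g s) (fun s => c3 * h s)).
  apply (is_RInt_plus (fun s => c1 * f s) (fun s => c2 * g s)).
  apply (is_RInt_scal f a b c1 lf Hf). apply (is_RInt_scal g a b c2 lg Hg).
  apply (is_RInt_scal h a b c3 lh Hh).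
Qed.

Lemma ex_RInt_cont_R (f : R -> R) a b : a <= b -> (forall z, a <= z <= b -> continuous f z) -> ex_RInt f a b.
Proof.
  intros Hab H. apply (ex_RInt_continuous (V := R_CompleteNormedModule)).
  intros z Hz. rewrite Rmin_left, Rmax_right in Hz by lra. apply H; auto.
Qed.

Theorem lemma3p5 (n : nat) (p y : vec) (Rr : R) (gamma : R -> vec)
  (f1 f2 : R -> R) :
  on_sphere n p ->
  0 < Rr < PI / 2 ->
  on_sphere n y -> gdist n p y = Rr ->
  (forall s, Rr <= s <= PI -> on_sphere n (gamma s)) ->
  gamma Rr = y -> gamma PI = vopp p ->
  (forall s t, Rr <= s <= PI -> Rr <= t <= PI ->
     gdist n (gamma s) (gamma t) = Rabs (s - t)) ->
  (forall s, Rr <= s <= PI -> gdist n p (gamma s) = s) ->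
  (forall s, 0 < s < PI ->
     is_derive f1 s ((- 3 * cos s * f1 s + 3 * cos s * f2 s) / sin s)) ->
  (forall s, 0 < s < PI ->
     is_derive f2 s (((cos Rr - cos s) * f1 s + (cos s - cos Rr) * f2 s) / sin s)) ->
  f1 Rr * sin Rr ^ 4 = cos Rr * 3 ->
  f2 Rr * sin Rr ^ 4 = cos Rr * 2 ->
  forall x : vec,
    on_sphere n x -> gdist n p x = Rr -> x <> y ->
    - 5 * tan Rr *
      dot n (Zfield n y gamma (fun s => f2 s * sin s ^ 3) Rr x)
            (sgrad n (gdist n p) x)
    = 1 + RInt (fun s => f2 s * sin s ^ 3) Rr PI.
Proof.
  intros Hp HR Hy Hpy Hgs HgR HgPI Hiso Hpg D1 D2 I1 I2 x Hx Hpx Hxy.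
  assert (HPI := PI_RGT_0).
  set (r := cos Rr) in *. set (sR := sin Rr) in *.
  assert (Hr : 0 < r) by (apply cos_gt_0; lra).
  assert (HsR : 0 < sR) by (apply sin_gt_0; lra).
  assert (Hsr : sR ^ 2 = 1 - r ^ 2) by (unfold sR, r; apply sin2').
  assert (Hr1 : r < 1) by nra.
  assert (Dpx : dot n p x = r) by (rewrite (gdist_cos n p x Hp Hx), Hpx; reflexivity).
  assert (Dpy : dot n p y = r) by (rewrite (gdist_cos n p y Hp Hy), Hpy; reflexivity).
  assert (Dpg : forall s, Rr <= s <= PI -> dot n p (gamma s) = cos s).
  { intros s Hs. rewrite (gdist_cos n p (gamma s) Hp (Hgs s Hs)), Hpg; auto. }
  assert (Dgy : forall s, Rr <= s <= PI -> dot n (gamma s) y = cos s * r + sin s * sR).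
  { intros s Hs. rewrite <- HgR at 1.
    rewrite (gdist_cos n (gamma s) (gamma Rr) (Hgs s Hs) (Hgs Rr ltac:(lra))).
    rewrite Hiso by lra. rewrite Rabs_right by lra. unfold r, sR. apply cos_minus. }
  destruct Hp as [Hp0 Hpp]. destruct Hy as [Hy0 Hyy]. destruct Hx as [Hx0 Hxx].
  set (B := dot n x y).
  assert (HB : B < 1).
  { destruct (dot_bound n x y (conj Hx0 Hxx) (conj Hy0 Hyy)) as [_ H1]. fold B in H1.
    destruct (Rle_lt_or_eq_dec _ _ H1) as [|E]; auto. exfalso. apply Hxy.
    apply functional_extensionality. intros i. destruct (Compare_dec.le_lt_dec i n).
    apply (dot_one_eq n x y (conj Hx0 Hxx) (conj Hy0 Hyy) E i); auto.
    rewrite Hx0, Hy0 by lia. reflexivity. }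
  set (e := fun i => (y i - r * p i) / sR).
  set (a := (B - 1 + sR ^ 2) / sR).
  assert (Hgam : forall s, Rr <= s <= PI -> forall i, (i <= n)%nat -> gamma s i = cos s * p i + sin s * e i).
  { intros s Hs. destruct (Hgs s Hs) as [Hg0 Hgg].
    set (k := sin s / sR). set (al := cos s - k * r).
    assert (Hsum : sum_f_R0 (fun i => (gamma s i - al * p i - k * y i) * (gamma s i - al * p i - k * y i)) n = 0).
    { rewrite (sum_lin6 _ (fun i => gamma s i * gamma s i) (fun i => p i * p i) (fun i => y i * y i)
         (fun i => p i * gamma s i) (fun i => gamma s i * y i) (fun i => p i * y i)
         1 (al ^ 2) (k ^ 2) (- 2 * al) (- 2 * k) (2 * al * k)) by (intros; ring).
      fold (dot n (gamma s) (gamma s)) (dot n p p) (dot n y y) (dot n p (gamma s)) (dot n (gamma s) y) (dot n p y).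
      rewrite Hgg, Hpp, Hyy, Dpg, Dgy, Dpy by auto.
      unfold al, k. pose proof (sin2' s).
      match goal with |- ?L = 0 => transitivity (L + (sR ^ 2 + r ^ 2 - 1) * (sin s ^ 2 / sR ^ 2) ) end.
      rewrite Hsr. ring. transitivity (1 - cos s ^ 2 - sin s ^ 2). field. lra. rewrite H. ring. }
    intros i Hi. pose proof (sum_zero_each _ n (fun i _ => Rle_0_sqr _) Hsum i Hi) as Z.
    apply Rsqr_0_uniq in Z. replace (gamma s i) with (al * p i + k * y i) by lra.
    unfold al, k, e. field. lra. }
  assert (Hsr' : r ^ 2 = 1 - sR ^ 2) by lra.
  assert (Hcx : forall s, Rr <= s <= PI -> dot n (gamma s) x = cc r a s).
  { intros s Hs. unfold dot. rewrite (sum_eq _ (fun i => (cos s * p i + sin s * e i) * x i)).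
    2:{ intros i Hi. rewrite Hgam; auto. }
    unfold e. rewrite (sum_lin6 _ (fun i => p i * x i) (fun i => x i * y i) (fun _ => 0)
         (fun _ => 0) (fun _ => 0) (fun _ => 0) (cos s - sin s * r / sR) (sin s / sR) 0 0 0 0) by (intros; field; lra).
    fold (dot n p x) (dot n x y). fold B. rewrite Dpx. unfold cc, a.
    transitivity (r * cos s + (B - r ^ 2) / sR * sin s). field. lra. rewrite Hsr'. field. lra. }
  assert (Hc1 : forall s, Rr <= s <= PI -> cc r a s < 1).
  { intros s Hs. rewrite <- Hcx by auto.
    destruct (dot_bound n (gamma s) x (Hgs s Hs) (conj Hx0 Hxx)) as [_ H1].
    destruct (Rle_lt_or_eq_dec _ _ H1) as [|E]; auto. exfalso.
    assert (Eq := dot_one_eq n (gamma s) x (Hgs s Hs) (conj Hx0 Hxx) E).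
    assert (Hcs : cos s = r).
    { rewrite <- Dpg by auto. rewrite <- Dpx. unfold dot. apply sum_eq. intros i Hi. rewrite Eq; auto. }
    assert (s = Rr).
    { rewrite <- (acos_cos s) by lra. rewrite <- (acos_cos Rr) by lra. rewrite Hcs. reflexivity. }
    subst s. apply Hxy. apply functional_extensionality. intros i. destruct (Compare_dec.le_lt_dec i n).
    rewrite <- HgR. symmetry. apply Eq; auto.
    rewrite Hx0, Hy0 by lia. reflexivity. }
  assert (Ha : a <= sR).
  { destruct (dot_bound n x y (conj Hx0 Hxx) (conj Hy0 Hyy)) as [_ H1]. fold B in H1.
    unfold a. apply Rmult_le_reg_r with sR; auto. unfold Rdiv. rewrite Rmult_assoc, Rinv_l by lra. nra. }
  assert (Hg : forall i, (i <= n)%nat -> sgrad n (gdist n p) x i = - (p i - r * x i) / sR).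
  { intros i Hi. rewrite sgrad_gdist; auto. 2: split; auto. 2: rewrite Dpx; lra.
    rewrite Dpx. replace (1 - r²) with (sR ^ 2) by (unfold Rsqr; lra). rewrite sqrt_pow2 by lra. reflexivity. }
  assert (HPy : forall i, (i <= n)%nat -> Psi n y x i = Qf B * (y i - B * x i)).
  { intros i Hi. rewrite Psi_formula; auto. 2: split; auto. 2: split; auto. 2: rewrite dot_sym; fold B; lra.
    rewrite dot_sym. reflexivity. }
  destruct (ftc_main f1 f2 Rr a HR D1 D2 Ha Hc1) as [Hht HFTC]. change (cos Rr) with r in HFTC.
  set (A1 := fun s => Qf (cc r a s) * cos s).
  set (A2 := fun s => Qf (cc r a s) * sin s).
  assert (HA : forall s, Rr <= s <= PI -> continuous A1 s /\ continuous A2 s).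
  { intros s Hs. pose proof (Hc1 s Hs) as Hc. unfold cc in Hc. unfold A1, A2, Qf, cc. split; apply exd_cont; auto_derive;
    repeat split; auto; repeat apply Rmult_integral_contrapositive_currified; lra. }
  assert (E1 : ex_RInt (fun s => ht f2 s * A1 s) Rr PI).
  { apply ex_RInt_cont_R. lra. intros z Hz. apply cont_mult_R. apply Hht; auto. apply HA; auto. }
  assert (E2 : ex_RInt (fun s => ht f2 s * A2 s) Rr PI).
  { apply ex_RInt_cont_R. lra. intros z Hz. apply cont_mult_R. apply Hht; auto. apply HA; auto. }
  assert (Eh : ex_RInt (ht f2) Rr PI).
  { apply ex_RInt_cont_R. lra. intros z Hz. apply Hht; auto. }
  set (J1 := RInt (fun s => ht f2 s * A1 s) Rr PI).
  set (J2 := RInt (fun s => ht f2 s * A2 s) Rr PI).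
  set (Jh := RInt (ht f2) Rr PI).
  assert (Hrel : sR ^ 2 * J1 + (- (r * a)) * J2 + (- (r / 5)) * Jh = - Wf f1 f2 r a Rr).
  { rewrite <- (is_RInt_unique _ _ _ _ HFTC). unfold J1, J2, Jh.
    rewrite <- RInt_lin3 by auto. apply RInt_ext. intros s _.
    unfold Gm, A1, A2. replace (cos s - cc r a s * r) with (sR ^ 2 * cos s - r * a * sin s).
    match goal with |- ?u = ?v => change (@eq R u v) end. field. unfold cc. rewrite Hsr. ring. }
  assert (HJh : RInt (fun s => f2 s * sin s ^ 3) Rr PI = Jh).
  { unfold Jh. apply RInt_ext. intros s Hs. rewrite Rmin_left, Rmax_right in Hs by lra.
    unfold ht. destruct (Rlt_dec s PI); [reflexivity | lra]. }
  assert (HI : forall i, (i <= n)%nat ->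
     RInt (fun s => f2 s * sin s ^ 3 * Psi n (gamma s) x i) Rr PI = (p i - r * x i) * J1 + (e i - a * x i) * J2).
  { intros i Hi. transitivity ((p i - r * x i) * J1 + (e i - a * x i) * J2 + 0 * Jh); [|match goal with |- ?u = ?v => change (@eq R u v) end; ring].
    unfold J1, J2, Jh. rewrite <- RInt_lin3 by auto. apply RInt_ext. intros s Hs.
    rewrite Rmin_left, Rmax_right in Hs by lra.
    unfold ht. destruct (Rlt_dec s PI) as [_|]; [|lra].
    rewrite Psi_formula; auto. 2: apply Hgs; lra. 2: split; auto. 2: rewrite Hcx by lra; apply Hc1; lra.
    rewrite Hcx by lra. rewrite Hgam by (auto; lra). unfold A1, A2, cc.
    match goal with |- ?u = ?v => change (@eq R u v) end. ring. }
  rewrite HJh.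
  set (A := Qf B).
  set (cy := A + J2 / sR). set (cx := - A * B - r * J1 - a * J2). set (cp := J1 - r * J2 / sR).
  set (gp := - 1 / sR). set (gx := r / sR).
  assert (HD : dot n (Zfield n y gamma (fun s => f2 s * sin s ^ 3) Rr x) (sgrad n (gdist n p) x)
     = cp * (- sR) + cy * r * (B - 1) / sR).
  { unfold dot at 1. unfold Zfield. cbv beta.
    rewrite (sum_eq _ (fun i => (Qf B * (y i - B * x i) + (p i - r * x i) * J1 + ((y i - r * p i) / sR - a * x i) * J2) * (- (p i - r * x i) / sR))).
    2:{ intros i Hi. rewrite HPy, HI, Hg by auto. unfold e. ring. }
    rewrite (sum_lin6 _ (fun i => p i * p i) (fun i => p i * x i) (fun i => p i * y i)
         (fun i => x i * x i) (fun i => x i * y i) (fun _ => 0)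
         (cp * gp) (cp * gx + cx * gp) (cy * gp) (cx * gx) (cy * gx) 0).
    2:{ intros i Hi. unfold cp, cx, cy, gp, gx, A. field. lra. }
    fold (dot n p p) (dot n p x) (dot n p y) (dot n x x) (dot n x y). fold B.
    rewrite Hpp, Dpx, Dpy, Hxx. unfold gp, gx.
    transitivity (cp * ((r ^ 2 - 1) / sR) + cy * r * (B - 1) / sR). field. lra.
    rewrite Hsr'. field. lra. }
  rewrite HD.
  assert (Hcc : cc r a Rr = B).
  { unfold cc, a. change (cos Rr) with r. change (sin Rr) with sR.
    transitivity (r ^ 2 + (B - 1 + sR ^ 2)). field. lra. lra. }
  assert (Hf1 : f1 Rr = r * 3 / sR ^ 4).
  { assert (0 < sR ^ 4) by (apply pow_lt; lra). apply (Rmult_eq_reg_r (sR ^ 4)). rewrite I1. field. lra. lra. }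
  assert (Hf2 : f2 Rr = r * 2 / sR ^ 4).
  { assert (0 < sR ^ 4) by (apply pow_lt; lra). apply (Rmult_eq_reg_r (sR ^ 4)). rewrite I2. field. lra. lra. }
  assert (HW : Wf f1 f2 r a Rr = (3 * r / (1 - B) + 2 * r / (1 - B) ^ 2) / 15).
  { unfold Wf. rewrite Hcc. change (sin Rr) with sR. rewrite Hf1, Hf2. field. split; lra. }
  assert (HJ1 : J1 = (r * a * J2 + r / 5 * Jh - Wf f1 f2 r a Rr) / sR ^ 2).
  { assert (0 < sR ^ 2) by (apply pow_lt; lra). apply (Rmult_eq_reg_l (sR ^ 2)); [|lra].
    replace (sR ^ 2 * ((r * a * J2 + r / 5 * Jh - Wf f1 f2 r a Rr) / sR ^ 2))
      with (r * a * J2 + r / 5 * Jh - Wf f1 f2 r a Rr) by (field; lra). lra. }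
  unfold cp, cy. rewrite HJ1, HW. unfold A, Qf, a, tan.
  change (sin Rr) with sR. change (cos Rr) with r.
  match goal with |- ?u = ?v => change (@eq R u v) end.
  field. repeat split; lra.
Qed.
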